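(* Let $x_1,\dots,x_n\in\mathbb{R}^d\setminus\{0\}$, and fix $\beta>0$ and $b>0$. The function $g:\mathbb{P}_d\to\mathbb{R}_{++}$ defined by $g(\Sigma)=\sum_{i=1}^n\left(\frac{x_i^\top\Sigma^{-1}x_i}{b}\right)^{\beta}$ is Euclidean convex and geodesically convex on $\mathbb{P}_d$.
   Context: $\mathbb{P}_d$ denotes the set of real symmetric $d\times d$ positive definite matrices, equipped with the affine-invariant Riemannian metric $\langle U,V\rangle_X=\operatorname{tr}(X^{-1}UX^{-1}V)$, whose geodesic from $A$ to $B$ is $\gamma(t)=A^{1/2}(A^{-1/2}BA^{-1/2})^tA^{1/2}$, $t\in[0,1]$. Geodesically convex means $t\mapsto g(\gamma(t))$ is convex on $[0,1]$ for every such geodesic; Euclidean convex means convex in the usual sense on the convex set $\mathbb{P}_d$. *)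

(* Defs.v *)
From HB Require Import structures.
From mathcomp Require Import all_boot all_order all_algebra.
From mathcomp Require Import all_classical all_reals all_analysis.
Set Implicit Arguments. Unset Strict Implicit. Unset Printing Implicit Defensive.
Import Order.TTheory GRing.Theory Num.Theory.
Local Open Scope ring_scope.

Definition posdef (R : realType) (d : nat) (A : 'M[R]_d) : Prop :=
  A^T = A /\ forall v : 'cV[R]_d, v != 0 -> 0 < (v^T *m A *m v) ord0 ord0.

Definition convex_on01 (R : realType) (f : R -> R) : Prop :=
  forall s u t : R, 0 <= s <= 1 -> 0 <= u <= 1 -> 0 <= t <= 1 ->
    f ((1 - t) * s + t * u) <= (1 - t) * f s + t * f u.

Definition euclid_convex (R : realType) (d : nat) (f : 'M[R]_d -> R) : Prop :=
  forall A B : 'M[R]_d, posdef A -> posdef B -> forall t : R, 0 <= t <= 1 ->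
    f ((1 - t) *: A + t *: B) <= (1 - t) * f A + t * f B.

(* Real power P^t of a positive definite P given a spectral decomposition
   P = U diag(lam) U^T (U orthogonal, lam > 0): P^t = U diag(lam^t) U^T. *)
Definition spec_rpow (R : realType) (d : nat) (U : 'M[R]_d) (lam : 'rV[R]_d) (t : R)
  : 'M[R]_d := U *m diag_mx (\row_i (lam ord0 i `^ t)) *m U^T.

(* Geodesic convexity w.r.t. the affine-invariant metric: along every geodesic
   gamma(t) = A^{1/2} (A^{-1/2} B A^{-1/2})^t A^{1/2}, t in [0,1].
   Here S is the (positive definite) square root A^{1/2}, so A^{-1/2} = S^{-1},
   and the real matrix power is computed from a spectral decomposition. *)
Definition geod_convex (R : realType) (d : nat) (f : 'M[R]_d -> R) : Prop :=
  forall (A B S U : 'M[R]_d) (lam : 'rV[R]_d),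
    posdef A -> posdef B -> posdef S -> S *m S = A ->
    U^T *m U = 1%:M -> (forall i, 0 < lam ord0 i) ->
    invmx S *m B *m invmx S = U *m diag_mx lam *m U^T ->
    convex_on01 (fun t => f (S *m spec_rpow U lam t *m S)).

Definition gfun (R : realType) (d n : nat) (x : 'I_n -> 'cV[R]_d) (beta b : R)
  (Sigma : 'M[R]_d) : R :=
  \sum_(i < n) (((x i)^T *m invmx Sigma *m x i) ord0 ord0 / b) `^ beta.

(* Main.v *)
Require Import Defs.
From HB Require Import structures.
From mathcomp Require Import all_boot all_order all_algebra.
From mathcomp Require Import all_classical all_reals all_analysis.
From mathcomp Require Import ring lra.
Import Order.TTheory GRing.Theory Num.Theory.
Local Open Scope ring_scope.

Section S.
Variable R : realType.

Lemma cexp (X Y t : R) : 0 <= t -> t <= 1 ->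
  expR ((1 - t) * X + t * Y) <= (1 - t) * expR X + t * expR Y.
Proof.
move=> t0 t1.
have := convex_expR (Itv01 t0 t1) (Y : R^o) (X : R^o).
by rewrite !convRE /= /unstable.onem addrC [t * expR Y + _]addrC.
Qed.

Lemma pow_step (p P Q b beta t : R) : 0 < p -> 0 < P -> 0 < Q -> 0 < b ->
  0 < beta -> 0 <= t -> t <= 1 -> ln p <= (1 - t) * ln P + t * ln Q ->
  (p / b) `^ beta <= (1 - t) * (P / b) `^ beta + t * (Q / b) `^ beta.
Proof.
move=> p0 P0 Q0 b0 be0 t0 t1 H.
rewrite /powR !gt_eqF ?divr_gt0 //.
apply: (@le_trans _ _ (expR ((1-t)*(beta*ln(P/b)) + t*(beta*ln(Q/b))))); last exact: cexp.
rewrite ler_expR !lnM ?posrE ?invr_gt0 // !lnV ?posrE //.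
nra.
Qed.

Definition phis {n} (c a : 'I_n -> R) r := \sum_j c j * expR (r * a j).

Lemma logconv_sum n (c a : 'I_n -> R) (s u t : R) :
  (forall j, 0 <= c j) -> (exists j, 0 < c j) -> 0 <= t -> t <= 1 ->
  let phi := phis c a in
  ln (phi ((1 - t) * s + t * u)) <= (1 - t) * ln (phi s) + t * ln (phi u).
Proof.
move=> c0 [j0 cj0] t0 t1 /=; set phi := phis c a.
have phi_gt0 r : 0 < phi r.
  rewrite /phi /phis (bigD1 j0) //=; apply: ltr_pwDl.
    by apply: mulr_gt0 => //; exact: expR_gt0.
  by apply: sumr_ge0 => j _; apply: mulr_ge0 => //; exact: expR_ge0.
set P := phi s; set Q := phi u.
have P0 : 0 < P := phi_gt0 s; have Q0 : 0 < Q := phi_gt0 u.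
set K := expR ((1 - t) * ln P + t * ln Q).
have K0 : 0 < K by exact: expR_gt0.
suff : phi ((1 - t) * s + t * u) <= K.
  by move=> H; rewrite -ler_expR lnK ?posrE.
have step j : expR (((1 - t) * s + t * u) * a j) <=
    K * ((1 - t) * (expR (s * a j) / P) + t * (expR (u * a j) / Q)).
  have -> : expR (((1 - t) * s + t * u) * a j) =
      K * expR ((1 - t) * (s * a j - ln P) + t * (u * a j - ln Q)).
    by rewrite /K -expRD; congr expR; ring.
  rewrite ler_pM2l //; apply: le_trans; first exact: cexp.
  by rewrite !expRD !expRN !lnK ?posrE.
apply: (@le_trans _ _ (\sum_j c j * (K * ((1 - t) * (expR (s * a j) / P) + t * (expR (u * a j) / Q))))).
  by apply: ler_sum => j _; apply: ler_wpM2l.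
have -> : \sum_j c j * (K * ((1 - t) * (expR (s * a j) / P) + t * (expR (u * a j) / Q))) =
   K * (1 - t) / P * P + K * t / Q * Q.
  rewrite {3}/P {3}/Q /phi /phis !mulr_sumr -big_split /=; apply: eq_bigr => j _; ring.
rewrite !divfK ?gt_eqF //; lra.
Qed.
Variable d : nat.
Implicit Types A B M : 'M[R]_d.
Implicit Types u v w : 'cV[R]_d.

Definition bil M u w : R := (u^T *m M *m w) ord0 ord0.

Lemma bilDl M u v w : bil M (u + v) w = bil M u w + bil M v w.
Proof. by rewrite /bil linearD /= !mulmxDl mxE. Qed.
Lemma bilDr M u v w : bil M w (u + v) = bil M w u + bil M w v.
Proof. by rewrite /bil !mulmxDr mxE. Qed.
Lemma bilZl M c u w : bil M (c *: u) w = c * bil M u w.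
Proof. by rewrite /bil linearZ /= -!scalemxAl mxE. Qed.
Lemma bilZr M c u w : bil M w (c *: u) = c * bil M w u.
Proof. by rewrite /bil -!scalemxAr mxE. Qed.
Lemma bilMD A B u w : bil (A + B) u w = bil A u w + bil B u w.
Proof. by rewrite /bil mulmxDr mulmxDl mxE. Qed.
Lemma bilMZ c A u w : bil (c *: A) u w = c * bil A u w.
Proof. by rewrite /bil -scalemxAr -scalemxAl mxE. Qed.
Lemma bil_sym M u w : M^T = M -> bil M u w = bil M w u.
Proof.
move=> sM; rewrite /bil -[in RHS]sM.
have -> : w^T *m M^T *m u = (u^T *m M *m w)^T by rewrite !trmx_mul trmxK mulmxA.
by rewrite [RHS]mxE.
Qed.

Lemma posdef_ge0 {A} v : posdef A -> 0 <= bil A v v.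
Proof.
case=> _ H; have [->|v0] := eqVneq v 0.
  by rewrite /bil mulmx0 mxE.
exact/ltW/H.
Qed.

Lemma posdef_unit {A} : posdef A -> A \in unitmx.
Proof.
case=> sA H; rewrite unitmxE unitfE; apply/negP => /det0P [v v0 vA].
have := H v^T; rewrite trmx_eq0 => /(_ v0).
by rewrite trmxK vA mul0mx mxE ltxx.
Qed.

Lemma posdef_inv {A} : posdef A -> posdef (invmx A).
Proof.
move=> pA; have uA := posdef_unit pA; case: pA => sA H; split.
  by rewrite trmx_inv sA.
move=> v v0.
have -> : (v^T *m invmx A *m v) = (invmx A *m v)^T *m A *m (invmx A *m v).
  by rewrite trmx_mul trmx_inv sA -!mulmxA (mulmxA A) mulmxV // mul1mx.
apply: H; apply: contra v0 => /eqP e.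
by rewrite -[v]mul1mx -(mulmxV uA) -mulmxA e mulmx0.
Qed.


Definition hq A x := bil (invmx A) x x.

Lemma hq_gt0 {A x} : posdef A -> x != 0 -> 0 < hq A x.
Proof. by move=> /posdef_inv [_ H] /H. Qed.

Lemma bil_invr A u x : A \in unitmx -> bil A u (invmx A *m x) = bil 1%:M u x.
Proof. by move=> uA; rewrite /bil !mulmxA -(mulmxA _ A) mulmxV // !mulmx1. Qed.

Lemma hq_bil A x : posdef A -> hq A x = bil A (invmx A *m x) (invmx A *m x).
Proof.
move=> pA; have uA := posdef_unit pA; case: pA => sA _.
by rewrite bil_invr // /hq /bil trmx_mul trmx_inv sA mulmx1.
Qed.

Lemma bil1_inv A x : posdef A -> bil 1%:M (invmx A *m x) x = hq A x.
Proof.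
move=> pA; have uA := posdef_unit pA; case: pA => sA _.
by rewrite /hq /bil mulmx1 trmx_mul trmx_inv sA.
Qed.

Lemma CS A v x : posdef A -> x != 0 -> (bil 1%:M v x) ^+ 2 <= bil A v v * hq A x.
Proof.
move=> pA x0; have hp := hq_gt0 pA x0; have uA := posdef_unit pA.
set y := invmx A *m x; set k := bil 1%:M v x; set hh := hq A x.
have Avy : bil A v y = k by rewrite bil_invr.
have Ayy : bil A y y = hh by rewrite /hh hq_bil.
have sA : A^T = A by case: pA.
have := posdef_ge0 (v + (- (k / hh)) *: y) pA.
rewrite !bilDl !bilDr !bilZl !bilZr (bil_sym _ y v sA) Avy Ayy.
move=> H.
have e : bil A v v + - (k / hh) * k + (- (k / hh) * k + - (k / hh) * (- (k / hh) * hh)) = bil A v v - k^+2 / hh.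
  by field; rewrite gt_eqF.
rewrite e subr_ge0 ler_pdivrMr // in H.
Qed.


Lemma posdef_comb {A B t} : posdef A -> posdef B -> 0 <= t <= 1 ->
  posdef ((1 - t) *: A + t *: B).
Proof.
move=> [sA HA] [sB HB] /andP[t0 t1]; split.
  by rewrite linearD /= !linearZ /= sA sB.
move=> v v0.
have := HA v v0; have := HB v v0.
have -> : (v^T *m ((1 - t) *: A + t *: B) *m v) ord0 ord0 =
  bil ((1 - t) *: A + t *: B) v v by [].
rewrite bilMD !bilMZ /bil => a b; nra.
Qed.

Lemma euclid_key A B x t : posdef A -> posdef B -> x != 0 -> 0 <= t <= 1 ->
  hq ((1 - t) *: A + t *: B) x * ((1 - t) / hq A x + t / hq B x) <= 1.
Proof.
move=> pA pB x0 /andP[t0 t1].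
set M := (1 - t) *: A + t *: B.
have pM : posdef M := posdef_comb pA pB (introT andP (conj t0 t1)).
have hA := hq_gt0 pA x0; have hB := hq_gt0 pB x0; have hM := hq_gt0 pM x0.
set w := invmx M *m x.
have e1 : bil 1%:M w x = hq M x by rewrite bil1_inv.
have cA := CS A w x pA x0; have cB := CS B w x pB x0.
rewrite e1 in cA cB.
have eM : hq M x = (1 - t) * bil A w w + t * bil B w w.
  by rewrite hq_bil // /M bilMD !bilMZ.
have aA : hq M x ^+ 2 / hq A x <= bil A w w by rewrite ler_pdivrMr.
have aB : hq M x ^+ 2 / hq B x <= bil B w w by rewrite ler_pdivrMr.
rewrite -(ler_pM2l hM) mulr1.
rewrite [X in _ <= X]eM.
have -> : hq M x * (hq M x * ((1 - t) / hq A x + t / hq B x)) =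
   (1 - t) * (hq M x ^+ 2 / hq A x) + t * (hq M x ^+ 2 / hq B x).
  by rewrite expr2; field; rewrite !gt_eqF.
apply: lerD; apply: ler_wpM2l => //; lra.
Qed.


Lemma phis_gt0 n (c a : 'I_n -> R) r :
  (forall j, 0 <= c j) -> (exists j, 0 < c j) -> 0 < phis c a r.
Proof.
move=> c0 [j0 cj0]; rewrite /phis (bigD1 j0) //=; apply: ltr_pwDl.
  by apply: mulr_gt0 => //; exact: expR_gt0.
by apply: sumr_ge0 => j _; apply: mulr_ge0 => //; exact: expR_ge0.
Qed.

Lemma log_from_key (h a b t : R) : 0 < h -> 0 < a -> 0 < b -> 0 <= t -> t <= 1 ->
  h * ((1 - t) / a + t / b) <= 1 -> ln h <= (1 - t) * ln a + t * ln b.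
Proof.
move=> h0 a0 b0 t0 t1 H.
have c := cexp (- ln a) (- ln b) t t0 t1.
rewrite !expRN !lnK ?posrE // in c.
rewrite -ler_expR lnK ?posrE //.
set L := (1 - t) * ln a + t * ln b.
have eL : (1 - t) * - ln a + t * - ln b = - L by rewrite /L; ring.
rewrite eL expRN in c.
have := le_trans (ler_wpM2l (ltW h0) c) H.
by rewrite ler_pdivrMr ?expR_gt0 // mul1r.
Qed.

Lemma inv_uniq (M N : 'M[R]_d) : M *m N = 1%:M -> invmx M = N.
Proof.
move=> e; have [uM _] := mulmx1_unit e.
by rewrite -[invmx M]mulmx1 -e mulmxA mulVmx // mul1mx.
Qed.

Definition Dg (lam : 'rV[R]_d) r : 'M[R]_d := diag_mx (\row_i (lam ord0 i `^ r)).

Lemma Dg_prod (lam : 'rV[R]_d) r : (forall i, 0 < lam ord0 i) -> Dg lam r *m Dg lam (- r) = 1%:M.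
Proof.
move=> l0; rewrite /Dg mulmx_diag -diag_const_mx; congr diag_mx.
apply/rowP => j; rewrite !mxE powRN mulfV // gt_eqF // powR_gt0 //.
Qed.

Lemma geod_inv (S U : 'M[R]_d) (lam : 'rV[R]_d) r : posdef S -> U^T *m U = 1%:M ->
  (forall i, 0 < lam ord0 i) ->
  invmx (S *m spec_rpow U lam r *m S) =
  invmx S *m U *m Dg lam (- r) *m U^T *m invmx S.
Proof.
move=> pS UU l0; have uS := posdef_unit pS.
have UUt : U *m U^T = 1%:M by apply: mulmx1C.
apply: inv_uniq; rewrite /spec_rpow -/(Dg lam r) -!mulmxA (mulKVmx uS).
rewrite (mulmxA U^T U) UU mul1mx (mulmxA (Dg lam r)) Dg_prod // mul1mx.
by rewrite (mulmxA U) UUt mul1mx mulmxV.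
Qed.

Lemma bil_diag (e : 'rV[R]_d) y : bil (diag_mx e) y y = \sum_j e 0 j * y j 0 ^+ 2.
Proof.
rewrite /bil mul_mx_diag mxE; apply: eq_bigr => j _; rewrite !mxE; ring.
Qed.

Lemma geod_hq (S U : 'M[R]_d) (lam : 'rV[R]_d) r (x : 'cV[R]_d) : posdef S -> U^T *m U = 1%:M ->
  (forall i, 0 < lam ord0 i) ->
  hq (S *m spec_rpow U lam r *m S) x =
  phis (fun j => (U^T *m invmx S *m x) j 0 ^+ 2) (fun j => - ln (lam 0 j)) r.
Proof.
move=> pS UU l0; have sS : S^T = S by case: pS.
rewrite /hq geod_inv // /phis.
set y := U^T *m invmx S *m x.
have -> : bil (invmx S *m U *m Dg lam (- r) *m U^T *m invmx S) x x = bil (Dg lam (- r)) y y.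
  rewrite /bil /y !trmx_mul trmxK trmx_inv sS !mulmxA //.
rewrite bil_diag; apply: eq_bigr => j _; rewrite !mxE /powR gt_eqF //.
by rewrite mulrC; congr (_ * expR _); ring.
Qed.

Lemma geod_y_ne0 (S U : 'M[R]_d) (x : 'cV[R]_d) : posdef S -> U^T *m U = 1%:M -> x != 0 ->
  exists j, 0 < (U^T *m invmx S *m x) j 0 ^+ 2.
Proof.
move=> pS UU x0; have uS := posdef_unit pS.
have UUt : U *m U^T = 1%:M by apply: mulmx1C.
set y := U^T *m invmx S *m x.
case: (pickP (fun j => y j 0 != 0)) => [j yj | H].
  exists j; rewrite lt_def sqr_ge0 andbT expf_neq0 //.
exfalso; move/negP: x0; apply.
have y0 : y = 0.
  apply/matrixP => i k; rewrite (ord1 k).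
  by have := H i; rewrite /= => /negbFE/eqP ->; rewrite mxE.
have : S *m U *m y = x by rewrite /y !mulmxA -(mulmxA S U) UUt mulmx1 mulmxV // mul1mx.
by rewrite y0 mulmx0 => <-.
Qed.

End S.

Theorem mainTheorem6 (R : realType) (d n : nat) (x : 'I_n -> 'cV[R]_d)
  (beta b : R) :
  (forall i, x i != 0) -> 0 < beta -> 0 < b ->
  euclid_convex (gfun x beta b) /\ geod_convex (gfun x beta b).
Proof.
move=> x0 be0 b0; split.
  move=> A B pA pB t /andP[t0 t1]; rewrite /gfun !mulr_sumr -big_split /=.
  apply: ler_sum => i _.
  have pM := posdef_comb _ _ pA pB (introT andP (conj t0 t1)).
  have k := euclid_key _ _ _ _ _ _ pA pB (x0 i) (introT andP (conj t0 t1)).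
  have hA := hq_gt0 _ _ pA (x0 i); have hB := hq_gt0 _ _ pB (x0 i); have hM := hq_gt0 _ _ pM (x0 i).
  exact: (pow_step _ _ _ _ _ _ _ hM hA hB b0 be0 t0 t1 (log_from_key _ _ _ _ _ hM hA hB t0 t1 k)).
move=> A B S U lam pA pB pS SS UU l0 e s u t _ _ /andP[t0 t1].
rewrite /gfun !mulr_sumr -big_split /=; apply: ler_sum => i _.
have [j cj] := geod_y_ne0 _ _ _ _ _ pS UU (x0 i).
set c := (fun j => (U^T *m invmx S *m x i) j 0 ^+ 2).
set a := (fun j : 'I_d => - ln (lam 0 j)).
have c0 : forall j, 0 <= c j by move=> j'; exact: sqr_ge0.
have cex : exists j, 0 < c j by exists j.
have := pow_step _ _ _ _ _ _ _ (phis_gt0 _ _ c a ((1 - t) * s + t * u) c0 cex) (phis_gt0 _ _ c a s c0 cex)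
   (phis_gt0 _ _ c a u c0 cex) b0 be0 t0 t1 (logconv_sum _ _ c a s u t c0 cex t0 t1).
by rewrite /c /a -!(geod_hq _ _ _ _ _ _ _ pS UU l0).
Qed.
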